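(* In the multi-sender unicast index-coding instance with $N=4$ messages, $K=15$ senders whose message sets are all $15$ nonempty subsets of $\{1,2,3,4\}$, each with link capacity $1$, and side information $\mathcal A_1=\{4\}$, $\mathcal A_2=\{3,4\}$, $\mathcal A_3=\{1,2\}$, $\mathcal A_4=\{2,3\}$, every achievable rate tuple satisfies $R_1+R_2+R_3\le 18$.
   Context: Model. $N$ independent messages $M_1,\dots,M_N$, $M_j$ uniform on $[1:2^{nR_j}]$ ($n$ the block length). Sender $k$ knows the messages $M_i$, $i\in\mathcal S_k$, and sends an index $L_k=f_k((M_i)_{i\in\mathcal S_k})\in[1:2^{nC_k})=\{1,\dots,2^{\lfloor nC_k\rfloor}\}$ over a noiseless broadcast link reaching all receivers. Receiver $j$ knows $M_i$, $i\in\mathcal A_j$, and must output an estimate $\hat M_j=g_j(L_1,\dots,L_K,(M_i)_{i\in\mathcal A_j})$ of $M_j$. A rate tuple is achievable if there exist such codes with $\Pr[(\hat M_1,\dots,\hat M_N)\ne(M_1,\dots,M_N)]\to0$ as $n\to\infty$. *)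

(* Defs.v *)
From Stdlib Require Import Reals List Arith ZArith.
Import ListNotations.
Open Scope R_scope.

(* Messages and senders are 0-indexed: message index i in {0..N-1}
   stands for M_(i+1); sender index k in {0..K-1} stands for sender k+1.
   A message tuple is a list of nats of length N; message i takes values
   in {0, ..., size_i - 1} (a relabelling of [1 : size_i]). *)

Definition nfloor (x : R) : nat := Z.to_nat (Int_part x).

(* |[1 : 2^{nR}]| = floor(2^{nR}) *)
Definition msg_size (n : nat) (r : R) : nat := nfloor (Rpower 2 (INR n * r)).

(* |[1 : 2^{nC})| = 2^{floor(nC)} *)
Definition link_size (n : nat) (c : R) : nat := 2 ^ nfloor (INR n * c).

Fixpoint tuples (sizes : list nat) : list (list nat) :=
  match sizes with
  | nil => [nil]
  | s :: ss => flat_map (fun x => map (cons x) (tuples ss)) (seq 0 s)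
  end.

(* A code: encoder of sender k applied to the full message tuple,
   decoder of receiver j applied to the list of link indices and the full
   message tuple; locality constraints are imposed in [valid_code]. *)
Record code := mkCode {
  enc : nat -> list nat -> nat;
  dec : nat -> list nat -> list nat -> nat }.

Definition msg_sizes (N n : nat) (Rt : nat -> R) : list nat :=
  map (fun j => msg_size n (Rt j)) (seq 0 N).

Definition agree_on (P : nat -> bool) (N : nat) (m m' : list nat) : Prop :=
  forall i, (i < N)%nat -> P i = true -> nth i m 0%nat = nth i m' 0%nat.

Definition valid_code (N K : nat) (S A : nat -> nat -> bool) (C : nat -> R)
  (n : nat) (Rt : nat -> R) (c : code) : Prop :=
  (forall k m m', (k < K)%nat -> agree_on (S k) N m m' -> enc c k m = enc c k m') /\
  (forall k m, (k < K)%nat -> In m (tuples (msg_sizes N n Rt)) ->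
      (enc c k m < link_size n (C k))%nat) /\
  (forall j L m m', (j < N)%nat -> agree_on (A j) N m m' -> dec c j L m = dec c j L m').

Definition links (K : nat) (c : code) (m : list nat) : list nat :=
  map (fun k => enc c k m) (seq 0 K).

Definition error (N K : nat) (c : code) (m : list nat) : bool :=
  existsb (fun j => negb (Nat.eqb (dec c j (links K c m) m) (nth j m 0%nat))) (seq 0 N).

(* Pr[(hatM_1..hatM_N) <> (M_1..M_N)] under uniform independent messages *)
Definition err_prob (N K n : nat) (Rt : nat -> R) (c : code) : R :=
  INR (length (filter (error N K c) (tuples (msg_sizes N n Rt))))
  / INR (length (tuples (msg_sizes N n Rt))).

Definition achievable (N K : nat) (S A : nat -> nat -> bool) (C : nat -> R)
  (Rt : nat -> R) : Prop :=
  (forall j, (j < N)%nat -> 0 <= Rt j) /\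
  exists codes : nat -> code,
    (forall n, valid_code N K S A C n Rt (codes n)) /\
    Un_cv (fun n => err_prob N K n Rt (codes n)) 0.

(* sender k (k = 0..14) knows message i iff bit i of k+1 is set:
   this runs over all 15 nonempty subsets of {1,2,3,4}. *)
Definition S_inst (k i : nat) : bool := Nat.testbit (S k) i.
Definition A_inst (j i : nat) : bool :=
  match j with
  | 0 => Nat.eqb i 3
  | 1 => Nat.eqb i 2 || Nat.eqb i 3
  | 2 => Nat.eqb i 0 || Nat.eqb i 1
  | 3 => Nat.eqb i 1 || Nat.eqb i 2
  | _ => false
  end%bool.
Definition C_inst (k : nat) : R := 1.

(* Main.v *)
Require Import Defs.
From Stdlib Require Import Reals Lra ZArith.
From mathcomp Require Import ssreflect ssrfun ssrbool eqtype ssrnat seq choice fintype finfun bigop finset.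
From mathcomp Require Import zify.
Set Implicit Arguments. Unset Strict Implicit.
Open Scope nat_scope.

Lemma seq_iota a b : List.seq a b = iota a b.
Proof. by elim: b a => //= b IH a; rewrite IH. Qed.

Lemma filter_eq (T : Type) (p : T -> bool) l : List.filter p l = filter p l.
Proof. by elim: l => //= x l ->. Qed.

Lemma len_filter_tuples (p : list nat -> bool) s ss :
  length (List.filter p (tuples (s :: ss))) =
  \sum_(x < s) length (List.filter (fun r => p ((x:nat) :: r)) (tuples ss)).
Proof.
rewrite /= seq_iota -(big_mkord xpredT (fun x => length (List.filter (fun r => p (x :: r)) (tuples ss)))).
rewrite /index_iota subn0.
elim: (iota 0 s) => [|x l IH]; first by rewrite big_nil.
rewrite big_cons /= List.filter_app List.length_app IH; congr addn.
by elim: (tuples ss) => //= r rs IHr; case: (p (x :: r)); rewrite /= IHr.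
Qed.

Section Comb.
Variables (c : code) (n s0 s1 s2 s3 : nat).
Definition TT := ((('I_s0 * 'I_s1) * 'I_s2) * 'I_s3)%type.
Definition o0 (t : TT) := t.1.1.1.
Definition o1 (t : TT) := t.1.1.2.
Definition o2 (t : TT) := t.1.2.
Definition o3 (t : TT) := t.2.
Definition mk (t : TT) : list nat := [:: (o0 t : nat); (o1 t : nat); (o2 t : nat); (o3 t : nat)].
Hypothesis HE : forall k m m', (k < 15)%coq_nat -> agree_on (S_inst k) 4 m m' -> enc c k m = enc c k m'.
Hypothesis HB : forall k t, (k < 15)%coq_nat -> enc c k (mk t) < 2^n.
Hypothesis HD : forall j L m m', (j < 4)%coq_nat -> agree_on (A_inst j) 4 m m' -> dec c j L m = dec c j L m'.

Lemma agree_mk P t t' :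
  (P 0 = true -> (o0 t : nat) = o0 t') -> (P 1 = true -> (o1 t : nat) = o1 t') ->
  (P 2 = true -> (o2 t : nat) = o2 t') -> (P 3 = true -> (o3 t : nat) = o3 t') ->
  agree_on P 4 (mk t) (mk t').
Proof.
move=> h0 h1 h2 h3 i Hi HP.
case: i Hi HP => [|[|[|[|i]]]] Hi HP /=; auto; lia.
Qed.

Ltac agr := apply agree_mk; intros HP; first [ assumption | congruence | (vm_compute in HP; discriminate) ].

Definition lk t := links 15 c (mk t).
Definition good t := ~~ error 4 15 c (mk t).

Lemma good_dec t j : good t -> (j < 4)%coq_nat -> dec c j (lk t) (mk t) = List.nth j (mk t) 0.
Proof.
rewrite /good /error => H Hj.
case E: (Nat.eqb (dec c j (links 15 c (mk t)) (mk t)) (List.nth j (mk t) 0)).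
  by apply/PeanoNat.Nat.eqb_eq.
have: List.existsb (fun j => negb (Nat.eqb (dec c j (links 15 c (mk t)) (mk t)) (List.nth j (mk t) 0))) (List.seq 0 4) = true.
  apply/List.existsb_exists; exists j; split; last by rewrite E.
  by apply/List.in_seq; lia.
by move=> E'; move: H; rewrite /error E'.
Qed.

Lemma lk_eq t t' : (forall k, (k < 15)%coq_nat -> enc c k (mk t) = enc c k (mk t')) -> lk t = lk t'.
Proof.
move=> H; rewrite /lk /links; apply: List.map_ext_in => k /List.in_seq Hk; apply: H; lia.
Qed.

Lemma R0 t t' : good t -> good t' -> (o3 t : nat) = o3 t' -> lk t = lk t' -> (o0 t : nat) = o0 t'.
Proof.
move=> g g' e3 el.
have h := @good_dec _ 0 g ltac:(lia); have h' := @good_dec _ 0 g' ltac:(lia); simpl in h, h'; rewrite -h -h'.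
rewrite el; apply: HD; first lia; agr.
Qed.

Lemma R2 t t' : good t -> good t' -> (o0 t : nat) = o0 t' -> (o1 t : nat) = o1 t' -> lk t = lk t' -> (o2 t : nat) = o2 t'.
Proof.
move=> g g' e0 e1 el.
have h := @good_dec _ 2 g ltac:(lia); have h' := @good_dec _ 2 g' ltac:(lia); simpl in h, h'; rewrite -h -h'.
rewrite el; apply: HD; first lia; agr.
Qed.

Lemma R1 t t' : good t -> good t' -> (o2 t : nat) = o2 t' -> (o3 t : nat) = o3 t' -> lk t = lk t' -> (o1 t : nat) = o1 t'.
Proof.
move=> g g' e2 e3 el.
have h := @good_dec _ 1 g ltac:(lia); have h' := @good_dec _ 1 g' ltac:(lia); simpl in h, h'; rewrite -h -h'.
rewrite el; apply: HD; first lia; agr.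
Qed.

Lemma TT_eq t t' : (o0 t : nat) = o0 t' -> (o1 t : nat) = o1 t' -> (o2 t : nat) = o2 t' -> (o3 t : nat) = o3 t' -> t = t'.
Proof.
case: t => [[[a b] c'] d]; case: t' => [[[a' b'] c''] d'] /= e0 e1 e2 e3.
by rewrite /o0 /o1 /o2 /o3 /= in e0 e1 e2 e3; rewrite (val_inj e0) (val_inj e1) (val_inj e2) (val_inj e3).
Qed.

Definition Bn := (2^n).-1.
Lemma Bn_S : Bn.+1 = 2^n.
Proof. by rewrite /Bn prednK // expn_gt0. Qed.

Lemma HB' k t : (k < 15)%coq_nat -> enc c k (mk t) < Bn.+1.
Proof. by rewrite Bn_S; apply: HB. Qed.

Definition vl (m : list nat) : list nat :=
  [:: enc c 0 m; enc c 1 m; enc c 2 m; enc c 7 m; enc c 8 m; enc c 9 m; enc c 10 m].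
Definition set1 (t : TT) (b : 'I_s1) : TT := (o0 t, b, o2 t, o3 t).
Definition g t := #|[set b : 'I_s1 | vl (mk (set1 t b)) == vl (mk t)]|.

Lemma vl_eq t t' : (o0 t : nat) = o0 t' -> (o1 t : nat) = o1 t' -> (o3 t : nat) = o3 t' ->
  vl (mk t) = vl (mk t').
Proof.
move=> e0 e1 e3; rewrite /vl; do 6 (f_equal; [apply: HE; [lia|agr]|]). f_equal; apply: HE; [lia|agr].
Qed.

Lemma ffun_enc m (idx : 'I_m -> nat) t t' : (forall i, (idx i < 15)%coq_nat) ->
  [ffun i => (inord (enc c (idx i) (mk t)) : 'I_Bn.+1)] = [ffun i => inord (enc c (idx i) (mk t'))] ->
  forall i, enc c (idx i) (mk t) = enc c (idx i) (mk t').
Proof.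
move=> Hi Hf i; have := congr1 (fun f : {ffun 'I_m -> 'I_Bn.+1} => val (f i)) Hf.
by rewrite /= !ffunE !inordK //; apply: HB'.
Qed.

Definition idx14 (i : 'I_14) : nat := if (i:nat) < 7 then (i:nat) else (i:nat).+1.
Definition key (t : TT) : 'I_s3 * {ffun 'I_14 -> 'I_Bn.+1} :=
  (o3 t, [ffun i => inord (enc c (idx14 i) (mk t))]).

Lemma key_enc t t' : key t = key t' -> forall k, (k < 15)%coq_nat -> enc c k (mk t) = enc c k (mk t').
Proof.
case=> e3 ef k Hk.
have e3' : (o3 t : nat) = o3 t' by rewrite e3.
case: (k =P 7) => [->|nk]; first by apply: HE; [lia|agr].
have [j Hj Hjk] : exists2 j, j < 14 & (if j < 7 then j else j.+1) = k.
  case: (ltnP k 7) => h; first by exists k => //; [lia | rewrite h].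
  exists k.-1; first lia.
  have -> : (k.-1 < 7) = false by lia.
  lia.
have := ffun_enc _ ef (Ordinal Hj).
rewrite /idx14 /= Hjk.
apply; move=> i; rewrite /idx14; case: ifP => _; have := ltn_ord i; lia.
Qed.

Lemma small_bound Tm : #|[set t | good t && (g t <= Tm)]| <= s3 * (2^n)^14 * Tm.
Proof.
rewrite -sum1_card (partition_big key predT) //=.
apply: leq_trans (_ : \sum_(k : 'I_s3 * {ffun 'I_14 -> 'I_Bn.+1}) Tm <= _).
  apply: leq_sum => k _.
  rewrite sum1dep_card.
  set F := [set _ | _].
  case: (pickP (mem F)) => [t0 Ht0|Hn]; last first.
    by rewrite (eq_card0 Hn).
  move: Ht0; rewrite !inE => /andP[/andP[gt0 lt0] /eqP kt0].
  rewrite -(card_in_imset (f := o1)); last first.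
    move=> t t'; rewrite !inE => /andP[/andP[gt _] /eqP kt] /andP[/andP[gt' _] /eqP kt'] e1.
    have el : lk t = lk t' by apply: lk_eq; apply: key_enc; rewrite kt kt'.
    have e3 : (o3 t : nat) = o3 t' by rewrite -[o3 t]/(key t).1 -[o3 t']/(key t').1 kt kt'.
    have e0 := R0 gt gt' e3 el.
    have e1' : (o1 t : nat) = o1 t' by rewrite e1.
    exact: TT_eq e0 e1' (R2 gt gt' e0 e1' el) e3.
  apply: leq_trans lt0; apply: subset_leq_card; apply/subsetP => b /imsetP[t].
  rewrite !inE => /andP[/andP[gt _] /eqP kt] ->.
  have ee : forall k, (k < 15)%coq_nat -> enc c k (mk t) = enc c k (mk t0).
    by apply: key_enc; rewrite kt kt0.
  have e3 : (o3 t : nat) = o3 t0 by rewrite -[o3 t]/(key t).1 -[o3 t0]/(key t0).1 kt kt0.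
  have e0 := R0 gt gt0 e3 (lk_eq ee).
  apply/eqP; rewrite (@vl_eq _ t) //.
  by rewrite /vl !ee //; lia.
by rewrite sum_nat_const card_prod card_ffun !card_ord Bn_S.
Qed.

Definition idx4 (i : 'I_4) : nat := nth 0 [:: 5; 6; 13; 14] i.
Definition hP (p : TT * 'I_s1) : 'I_s0 * 'I_s2 * 'I_s3 * 'I_s1 * {ffun 'I_4 -> 'I_Bn.+1} :=
  (o0 p.1, o2 p.1, o3 p.1, p.2, [ffun i => inord (enc c (idx4 i) (mk p.1))]).
Definition PP := [set p : TT * 'I_s1 | good p.1 && (vl (mk (set1 p.1 p.2)) == vl (mk p.1))].

Lemma PP_bound : #|PP| <= s0 * s2 * s3 * s1 * (2^n)^4.
Proof.
rewrite -(card_in_imset (f := hP)); last first.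
  move=> [t b] [t' b']; rewrite !inE /= => /andP[gt /eqP vt] /andP[gt' /eqP vt'].
  case=> e0 e2 e3 eb ef.
  have i4 : forall i : 'I_4, (idx4 i < 15)%coq_nat.
    move=> i; rewrite /idx4; case: i => [[|[|[|[|i]]]] Hi] //=; lia.
  have fe := ffun_enc i4 ef.
  have e0' : (o0 t : nat) = o0 t' by rewrite e0.
  have e2' : (o2 t : nat) = o2 t' by rewrite e2.
  have e3' : (o3 t : nat) = o3 t' by rewrite e3.
  have vv : vl (mk t) = vl (mk t').
    rewrite -vt -vt'; apply: vl_eq => //=; by rewrite eb.
  move: vv => [v0 v1 v2 v7 v8 v9 v10].
  have ee : forall k, (k < 15)%coq_nat -> enc c k (mk t) = enc c k (mk t').
    move=> k Hk.
    do 15 (destruct k as [|k]; [ first [ assumption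
         | (apply: HE; [lia|agr])
         | exact: (fe (@Ordinal 4 0 isT))
         | exact: (fe (@Ordinal 4 1 isT))
         | exact: (fe (@Ordinal 4 2 isT))
         | exact: (fe (@Ordinal 4 3 isT)) ] | ]).
    lia.
  have e1 := R1 gt gt' e2' e3' (lk_eq ee).
  by rewrite (TT_eq e0' e1 e2' e3') eb.
apply: leq_trans (max_card _) _.
by rewrite !card_prod card_ffun !card_ord Bn_S.
Qed.

Lemma PP_card : #|PP| = \sum_(t | good t) g t.
Proof.
rewrite -sum1dep_card.
rewrite (eq_bigr (fun t => \sum_(b | vl (mk (set1 t b)) == vl (mk t)) 1)); last first.
  by move=> t _; rewrite sum1dep_card.
by rewrite pair_big_dep.
Qed.

Lemma large_bound Tm : #|[set t | good t && (Tm < g t)]| * Tm.+1 <= s0 * s2 * s3 * s1 * (2^n)^4.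
Proof.
apply: leq_trans PP_bound; rewrite PP_card -sum_nat_const.
apply: leq_trans (_ : \sum_(t in [set t | good t && (Tm < g t)]) g t <= _).
  by apply: leq_sum => t; rewrite inE => /andP[].
rewrite big_mkcond [X in _ <= X]big_mkcond /=; apply: leq_sum => t _.
by rewrite inE; case: (good t) => //=; case: ifP.
Qed.

Lemma count_main : 8 * #|[set t : TT | ~~ good t]| <= #|{: TT}| -> 0 < s3 ->
  5 * (s0 * s1 * s2) <= 32 * 2^(18*n).
Proof.
move=> Hbad Hs3.
set Tm := 4 * 2^(4*n).
have hs := small_bound Tm.
have hl := large_bound Tm.
have hT : #|{: TT}| = s0 * s1 * s2 * s3 by rewrite !card_prod !card_ord.
have hG : #|[set t | good t]| + #|[set t : TT | ~~ good t]| = #|{: TT}|.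
  rewrite -(cardsC [set t | good t]); congr addn; apply: eq_card => t; by rewrite !inE.
have hU : #|[set t | good t]| <= #|[set t | good t && (g t <= Tm)]| + #|[set t | good t && (Tm < g t)]|.
  apply: leq_trans (leq_card_setU _ _); apply: subset_leq_card; apply/subsetP => t.
  by rewrite !inE; case: (good t); case: leqP.
have X : 4 * #|[set t | good t && (Tm < g t)]| <= s0 * s1 * s2 * s3.
  have : 2^(4*n) * (4 * #|[set t | good t && (Tm < g t)]|) <= 2^(4*n) * (s0 * s1 * s2 * s3).
    apply: leq_trans (_ : #|[set t | good t && (Tm < g t)]| * Tm.+1 <= _); last first.
      apply: leq_trans hl _; rewrite -expnM [n * 4]mulnC; move: (2^(4*n)) => Z; nia.
    rewrite /Tm; nia.
  by rewrite leq_pmul2l // expn_gt0.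
have Y : s3 * (2^n)^14 * Tm = s3 * (4 * 2^(18*n)).
  have E2 : 2^(n*14) * 2^(4*n) = 2^(18*n) by rewrite -expnD; congr (2 ^ _); lia.
  rewrite /Tm -expnM -E2; move: (2^(n*14)) (2^(4*n)) => Z1 Z2; nia.
rewrite Y in hs.
have : s3 * (5 * (s0 * s1 * s2)) <= s3 * (32 * 2^(18*n)).
  move: (2^(18*n)) hs => Z hs; nia.
by rewrite leq_pmul2l.
Qed.

End Comb.

Lemma bridge (s0 s1 s2 s3 : nat) (p : list nat -> bool) :
  length (List.filter p (tuples [:: s0; s1; s2; s3])) =
  #|[set t : TT s0 s1 s2 s3 | p (mk t)]|.
Proof.
rewrite -sum1dep_card big_mkcond.
symmetry; rewrite -(pair_bigA _ (fun x (d : 'I_s3) => if p (mk (x, d)) then 1 else 0)).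
rewrite -(pair_bigA _ (fun x (c : 'I_s2) => \sum_(d < s3) if p (mk (x, c, d)) then 1 else 0)).
rewrite -(pair_bigA _ (fun (a : 'I_s0) (b : 'I_s1) => \sum_(c < s2) \sum_(d < s3) if p (mk (a, b, c, d)) then 1 else 0)).
symmetry; rewrite len_filter_tuples; apply: eq_bigr => a _.
rewrite len_filter_tuples; apply: eq_bigr => b _.
rewrite len_filter_tuples; apply: eq_bigr => c _.
rewrite len_filter_tuples; apply: eq_bigr => d _.
by rewrite /=; case: (p _).
Qed.

Lemma in_tuples (s0 s1 s2 s3 : nat) (t : TT s0 s1 s2 s3) : List.In (mk t) (tuples [:: s0; s1; s2; s3]).
Proof.
have : (0 < length (List.filter (fun r => r == mk t) (tuples [:: s0; s1; s2; s3])))%coq_nat.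
  rewrite bridge; apply/ltP; apply/card_gt0P; exists t; by rewrite inE.
case E: (List.filter _ _) => [|x l] /=; first lia.
have : List.In x (List.filter (fun r => r == mk t) (tuples [:: s0; s1; s2; s3])) by rewrite E; left.
by case/List.filter_In => H /eqP <-.
Qed.

Lemma powE k : Nat.pow 2 k = (2^k)%N.
Proof. elim: k => // k IH; by rewrite expnS /= IH -multE. Qed.

Open Scope R_scope.

Lemma INR_expn2 k : INR (2^k)%N = 2^k.
Proof.
elim: k => // k IH; rewrite expnS -multE mult_INR IH /=; lra.
Qed.

Lemma nfloor_INR k : nfloor (INR k) = k.
Proof.
rewrite /nfloor /Int_part.
have <- : (Z.of_nat k + 1)%Z = up (INR k).
  apply: tech_up; rewrite plus_IZR -INR_IZR_INZ /=; lra.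
rewrite Z.add_simpl_r; exact: Nat2Z.id.
Qed.

Lemma link1 n k : link_size n (C_inst k) = (2^n)%N.
Proof. by rewrite /link_size /C_inst Rmult_1_r nfloor_INR powE. Qed.

Lemma msize r n : 0 <= r -> (1 <= msg_size n r)%coq_nat /\ Rpower 2 (INR n * r) <= 2 * INR (msg_size n r).
Proof.
move=> hr.
set x := Rpower 2 (INR n * r).
have hx : 1 <= x.
  rewrite /x -(Rpower_O 2); last lra.
  apply: Rle_Rpower; first lra.
  apply: Rmult_le_pos => //; exact: pos_INR.
have [h1 h2] := base_Int_part x.
have hz : (0 < Int_part x)%Z.
  have : (0 < Int_part x + 1)%Z by apply: lt_IZR; rewrite plus_IZR; lra.
  case: (Z.eq_dec (Int_part x) 0) => e; last lia.
  rewrite e /= in h2; lra.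
have hI : INR (msg_size n r) = IZR (Int_part x).
  by rewrite /msg_size /nfloor -/x INR_IZR_INZ Z2Nat.id //; lia.
have hz1 : 1 <= IZR (Int_part x) by apply: IZR_le; lia.
split.
  apply: INR_le; rewrite hI /=; lra.
rewrite hI; lra.
Qed.

Lemma len_true (l : list (list nat)) : length l = length (List.filter (fun _ => true) l).
Proof. by elim: l => //= x l ->. Qed.

Lemma per_n (Rt : nat -> R) cd n :
  (forall j, (j < 4)%coq_nat -> 0 <= Rt j) ->
  valid_code 4 15 S_inst A_inst C_inst n Rt cd -> err_prob 4 15 n Rt cd < /8 ->
  Rpower 2 (INR n * (Rt 0%N + Rt 1%N + Rt 2%N)) <= 52 * 2^(18*n).
Proof.
move=> hR [VE [VB VD]] herr.
have Hs : msg_sizes 4 n Rt = [:: msg_size n (Rt 0%N); msg_size n (Rt 1%N); msg_size n (Rt 2%N); msg_size n (Rt 3%N)] by [].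
have [h0 p0] := msize n (hR 0%N ltac:(lia)).
have [h1 p1] := msize n (hR 1%N ltac:(lia)).
have [h2 p2] := msize n (hR 2%N ltac:(lia)).
have [h3 p3] := msize n (hR 3%N ltac:(lia)).
set s0 := msg_size n (Rt 0%N) in Hs h0 p0.
set s1 := msg_size n (Rt 1%N) in Hs h1 p1.
set s2 := msg_size n (Rt 2%N) in Hs h2 p2.
set s3 := msg_size n (Rt 3%N) in Hs h3 p3.
have HB : forall k (t : TT s0 s1 s2 s3), (k < 15)%coq_nat -> (enc cd k (mk t) < 2^n)%N.
  move=> k t Hk; have := VB k (mk t) Hk; rewrite Hs link1 => h; apply/ltP; apply: h; exact: in_tuples.
have hcount := @count_main cd n s0 s1 s2 s3 VE HB VD.
have hT : #|{: TT s0 s1 s2 s3}| = (s0 * s1 * s2 * s3)%N by rewrite !card_prod !card_ord.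
have hbad : (8 * #|[set t : TT s0 s1 s2 s3 | ~~ good cd t]| <= #|{: TT s0 s1 s2 s3}|)%N.
  move: herr; rewrite /err_prob Hs bridge len_true bridge.
  have -> : #|[set t : TT s0 s1 s2 s3 | true]| = #|{: TT s0 s1 s2 s3}|.
    by apply: eq_card => t; rewrite inE.
  have -> : #|[set t : TT s0 s1 s2 s3 | error 4 15 cd (mk t)]| = #|[set t : TT s0 s1 s2 s3 | ~~ good cd t]|.
    by apply: eq_card => t; rewrite !inE /good negbK.
  move: #|[set _ | _]| => b; rewrite hT => hb.
  have hpos : 0 < INR (s0 * s1 * s2 * s3)%N.
    apply: lt_0_INR; rewrite -!multE; nia.
  have : INR (8 * b)%N < INR (s0 * s1 * s2 * s3)%N.
    have -> : INR (8 * b)%N = 8 * INR b by rewrite -multE mult_INR; simpl (INR 8); lra.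
    have := hb; rewrite /Rdiv => hb'.
    apply: (Rmult_lt_reg_r (/ INR (s0 * s1 * s2 * s3)%N)); first exact: Rinv_0_lt_compat.
    rewrite Rinv_r; last lra.
    lra.
  move/INR_lt => /ltP; exact: ltnW.
have hc := hcount hbad ltac:(apply/ltP; lia).
have hcR : 5 * (INR s0 * INR s1 * INR s2) <= 32 * 2^(18*n).
  move/leP/le_INR: hc; rewrite -!multE !mult_INR INR_expn2 /=; lra.
have e1 : Rpower 2 (INR n * (Rt 0%N + Rt 1%N + Rt 2%N)) =
   Rpower 2 (INR n * Rt 0%N) * Rpower 2 (INR n * Rt 1%N) * Rpower 2 (INR n * Rt 2%N).
  by rewrite !Rmult_plus_distr_l !Rpower_plus.
rewrite e1.
have q0 : 0 <= Rpower 2 (INR n * Rt 0%N) by left; apply: exp_pos.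
have q1 : 0 <= Rpower 2 (INR n * Rt 1%N) by left; apply: exp_pos.
have q2 : 0 <= Rpower 2 (INR n * Rt 2%N) by left; apply: exp_pos.
have : Rpower 2 (INR n * Rt 0%N) * Rpower 2 (INR n * Rt 1%N) * Rpower 2 (INR n * Rt 2%N)
   <= (2 * INR s0) * (2 * INR s1) * (2 * INR s2).
  apply: Rmult_le_compat => //; first exact: Rmult_le_pos.
  by apply: Rmult_le_compat.
have h2p : 0 <= 2 ^ (18 * n) by apply: pow_le; lra.
lra.
Qed.

Theorem mainTheorem5 (Rt : nat -> R) :
  achievable 4 15 S_inst A_inst C_inst Rt ->
  Rt 0%nat + Rt 1%nat + Rt 2%nat <= 18.
Proof.
move=> [hR [codes [hval hcv]]].
have [N HN] := hcv (/8) ltac:(lra).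
set S := Rt 0%nat + Rt 1%nat + Rt 2%nat.
case: (Rle_lt_dec S 18) => // hS; exfalso.
set d := S - 18.
have ln2 : 0 < ln 2 by have := ln_lt_2; lra.
have dl : 0 < d * ln 2 by apply: Rmult_lt_0_compat; rewrite /d; lra.
have [ha _] := archimed (52 / (d * ln 2)).
set m := Z.to_nat (up (52 / (d * ln 2))).
have hm : 52 / (d * ln 2) < INR m.
  rewrite /m INR_IZR_INZ Z2Nat.id //.
  apply: le_IZR; have : 0 < 52 / (d * ln 2) by apply: Rdiv_lt_0_compat; lra.
  lra.
set n := Nat.max N m.
have hnN : (n >= N)%coq_nat by rewrite /n; lia.
have hnm : INR m <= INR n by apply: le_INR; rewrite /n; lia.
have he : err_prob 4 15 n Rt (codes n) < /8.
  have := HN n hnN; rewrite /Rdist Rminus_0_r => h.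
  exact: Rle_lt_trans (Rle_abs _) h.
have hp := per_n hR (hval n) he.
have e2 : 2 ^ (18 * n) = Rpower 2 (INR n * 18).
  rewrite -Rpower_pow; last lra.
  by rewrite -multE mult_INR Rmult_comm; simpl (INR 18); f_equal; ring.
have e3 : Rpower 2 (INR n * S) = Rpower 2 (INR n * 18) * Rpower 2 (INR n * d).
  by rewrite -Rpower_plus /d; f_equal; ring.
rewrite -/S e3 e2 in hp.
have hpos : 0 < Rpower 2 (INR n * 18) by apply: exp_pos.
have hle : Rpower 2 (INR n * d) <= 52.
  apply: (Rmult_le_reg_l (Rpower 2 (INR n * 18))) => //; lra.
have : 1 + INR n * d * ln 2 < Rpower 2 (INR n * d).
  rewrite /Rpower Rmult_assoc; apply: exp_ineq1.
  have h52 : 0 < 52 / (d * ln 2) by apply: Rdiv_lt_0_compat; lra.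
  have hn : 0 < INR n by lra.
  apply: Rgt_not_eq; exact: Rmult_lt_0_compat.
have : 52 < INR n * d * ln 2.
  have : 52 / (d * ln 2) * (d * ln 2) < INR n * (d * ln 2).
    apply: Rmult_lt_compat_r => //; lra.
  rewrite /Rdiv Rmult_assoc Rinv_l; last lra.
  lra.
lra.
Qed.
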